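(* There is a universal constant $c$ (one can take $c=2$) such that for all $d\ge2$, $n\ge1$ and every linear operator $O$ on $(\mathbb{C}^d)^{\otimes n}$ with $\|O\|_2=1$, $$H[O]\le c\,[\log n+\log d]\,I[O]+h(P_O[\vec 0]),$$ where $h(x)=-x\log x-(1-x)\log(1-x)$ is the binary entropy and logarithms are base 2.
   Context: Let $V=\mathbb{Z}_d\times\mathbb{Z}_d$; for $a=(s,t)\in V$, $P_a=X^sZ^t$ with $X|j\rangle=|j+1\bmod d\rangle$, $Z|j\rangle=e^{2\pi ij/d}|j\rangle$; for $\vec a\in V^n$, $P_{\vec a}=\bigotimes_iP_{a_i}$ and $|\vec a|$ is the number of $i$ with $a_i\ne(0,0)$. $\|A\|_2=(d^{-n}\mathrm{Tr}(A^\dagger A))^{1/2}$. For $\|O\|_2=1$, $P_O[\vec a]=d^{-2n}|\mathrm{Tr}(OP_{\vec a})|^2$ is a probability distribution on $V^n$; $\vec 0$ is the all-$(0,0)$ vector. The quantum Fourier entropy is $H[O]=-\sum_{\vec a}P_O[\vec a]\log P_O[\vec a]$ and the total influence is $I[O]=\sum_{\vec a}|\vec a|P_O[\vec a]$. *)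

(* Defs.v *)
From HB Require Import structures.
From mathcomp Require Import all_boot all_order all_algebra.
From mathcomp Require Import reals exp trigo.
From mathcomp Require Import complex.
Set Implicit Arguments. Unset Strict Implicit. Unset Printing Implicit Defensive.
Import Order.TTheory GRing.Theory Num.Theory.
Local Open Scope ring_scope.

Section Defs.
Variable R : realType.
Variables d n : nat.

(* Computational basis of (C^d)^{(x) n}: strings j = (j_1,...,j_n), j_i in Z_d. *)
Definition basis := {ffun 'I_n -> 'I_d}.

(* A linear operator on (C^d)^{(x) n}, given by its matrix
   O x y = <x| O |y> in the computational basis. *)
Definition op := basis -> basis -> R[i].

Definition pvec := {ffun 'I_n -> 'I_d * 'I_d}.

Definition omega : R[i] :=
  Complex (cos (2 * pi / d%:R)) (sin (2 * pi / d%:R)).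

(* matrix entry <j| X^s Z^t |k> = [j = k + s mod d] * omega^(t k),
   since X^s Z^t |k> = e^{2 pi i t k/d} |k + s mod d>. *)
Definition pauli1 (a : 'I_d * 'I_d) (j k : 'I_d) : R[i] :=
  if (j : nat) == ((k + a.1) %% d)%N then omega ^+ (a.2 * k) else 0.

(* P_a = (x)_i P_{a_i}, entries of a tensor product are products of entries *)
Definition pauli (a : pvec) : op :=
  fun x y => \prod_(i < n) pauli1 (a i) (x i) (y i).

Definition trace (A : op) : R[i] := \sum_(x : basis) A x x.
Definition opmul (A B : op) : op := fun x y => \sum_(z : basis) A x z * B z y.
Definition adj (A : op) : op := fun x y => conjc (A y x).

Definition sqmod (z : R[i]) : R := complex.Re z ^+ 2 + complex.Im z ^+ 2.

(* ||A||_2 = (d^{-n} Tr(A^dagger A))^{1/2}  (Tr(A^dagger A) is real >= 0) *)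
Definition norm2 (A : op) : R :=
  Num.sqrt (complex.Re (trace (opmul (adj A) A)) / (d ^ n)%:R).

Definition PO (O : op) (a : pvec) : R :=
  sqmod (trace (opmul O (pauli a))) / ((d ^ n) ^ 2)%:R.

Definition log2 (x : R) : R := ln x / ln 2.

Definition xlog2x (x : R) : R := if x == 0 then 0 else x * log2 x.

Definition weight (a : pvec) : nat :=
  #|[set i : 'I_n | ((a i).1 != 0 :> nat) || ((a i).2 != 0 :> nat)]|.

Definition fourier_entropy (O : op) : R := - \sum_(a : pvec) xlog2x (PO O a).

Definition total_influence (O : op) : R := \sum_(a : pvec) (weight a)%:R * PO O a.

(* the all-(0,0) vector of V^n (needs d > 0 to name 0 in Z_d) *)
Definition zero_vec (Hd : (0 < d)%N) : pvec :=
  [ffun=> (Ordinal Hd, Ordinal Hd)].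

End Defs.

Definition binary_entropy (R : realType) (x : R) : R :=
  - xlog2x x - xlog2x (1 - x).

(* Main.v *)
Require Import Defs.
From HB Require Import structures.
From mathcomp Require Import all_boot all_order all_algebra.
From mathcomp Require Import reals exp trigo.
From mathcomp Require Import complex.
From mathcomp Require Import ring lra zify.
Import Order.TTheory GRing.Theory Num.Theory.
Local Open Scope ring_scope.

Set Implicit Arguments.

Section Ent.
Variable R : realType.

Lemma ln_le_sub1 (x : R) : 0 < x -> ln x <= x - 1.
Proof.
move=> x0; have := @le_ln1Dx R (x - 1).
rewrite (_ : 1 + (x - 1) = x); last by rewrite addrC subrK.
apply; lra.
Qed.

Lemma pow_bound (e : R) (m : nat) : 0 <= e -> 2 * m%:R * e <= 1 ->
  (1 + e) ^+ m <= 1 + 2 * m%:R * e.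
Proof.
move=> e0; elim: m => [|m IH] h; first by rewrite expr0 mulr0 mul0r addr0.
have h' : 2 * m%:R * e <= 1 by move: h; rewrite -natr1; nra.
have := IH h'; rewrite exprS -natr1 => H.
have hm : 0 <= m%:R :> R by [].
have hp : 0 <= (1 + e) ^+ m by apply: exprn_ge0; lra.
have : (1 + e) * (1 + e) ^+ m <= (1 + e) * (1 + 2 * m%:R * e).
  by apply: ler_wpM2l => //; lra.
move: h; rewrite -natr1; nra.
Qed.

Lemma pow_bound2 (e : R) (n : nat) : (1 <= n)%N -> 0 <= e -> n%:R ^+ 2 * e <= 1 ->
  (1 + e) ^+ n <= 2.
Proof.
move=> n1 e0 h; case: n n1 h => [//|[|n]] _ h.
  by rewrite expr1; move: h; rewrite expr1n mul1r; lra.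
have hn : 2%:R <= n.+2%:R :> R by rewrite ler_nat.
have h2 : 2 * n.+2%:R * e <= 1 by nra.
apply: (le_trans (@pow_bound e n.+2 e0 h2)); nra.
Qed.

Lemma entropy_core (I : finType) (P q w : I -> R) (x0 : I) (c : R) :
  (forall a, 0 <= P a) -> \sum_a P a = 1 -> (forall a, 0 < q a) ->
  q x0 = 1 -> w x0 = 0 -> \sum_a q a <= 2 ->
  (forall a, ln (q a) = - c * w a) ->
  - \sum_a P a * ln (P a) <=
    c * \sum_a w a * P a - P x0 * ln (P x0) - (1 - P x0) * ln (1 - P x0).
Proof.
move=> P0 P1 q0 qx0 wx0 qs lnq.
set S := \sum_(a | a != x0) P a.
have SE : S = 1 - P x0 by rewrite -P1 (bigD1 x0) //= addrC addrK.
have S0 : 0 <= S by apply: sumr_ge0.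
have SP : forall a, a != x0 -> P a <= S.
  move=> a ax; rewrite /S (bigD1 a) //= lerDl; apply: sumr_ge0 => i _; exact: P0.
have key : forall a, a != x0 ->
   - (P a * ln (P a)) <= - (P a * ln S) + c * (w a * P a) + (S * q a - P a).
  move=> a ax; have [->|Pa] := eqVneq (P a) 0.
    have h := mulr_ge0 S0 (ltW (q0 a)); rewrite !mul0r !mulr0; lra.
  have Pa0 : 0 < P a by rewrite lt_def Pa P0.
  have SPa : 0 < S by apply: lt_le_trans (SP a ax).
  have qa := q0 a.
  have := @ln_le_sub1 _ (divr_gt0 (mulr_gt0 SPa qa) Pa0).
  rewrite ln_div ?posrE ?mulr_gt0 // lnM ?posrE // lnq => H.
  have H2 := ler_wpM2l (ltW Pa0) H.
  have E1 : P a * (S * q a / P a - 1) = S * q a - P a by field.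
  have E2 : P a * (ln S + - c * w a - ln (P a)) =
     P a * ln S - c * (w a * P a) - P a * ln (P a) by ring.
  rewrite E1 E2 in H2; lra.
have sumkey : \sum_(a | a != x0) - (P a * ln (P a)) <=
   \sum_(a | a != x0) (- (P a * ln S) + c * (w a * P a) + (S * q a - P a)).
  by apply: ler_sum.
have E1 : \sum_(a | a != x0) - (P a * ln S) = - (S * ln S) by rewrite sumrN -mulr_suml.
have E2 : \sum_(a | a != x0) c * (w a * P a) = c * \sum_(a | a != x0) w a * P a
  by rewrite -mulr_sumr.
have E3 : \sum_(a | a != x0) (S * q a - P a) = S * \sum_(a | a != x0) q a - S
  by rewrite big_split /= sumrN -mulr_sumr.
rewrite big_split big_split /= E1 E2 E3 in sumkey.
have qS : \sum_(a | a != x0) q a <= 1.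
  by move: qs; rewrite (bigD1 x0) //= qx0; lra.
have wS : \sum_(i | i != x0) w i * P i = \sum_a w a * P a.
  by rewrite [in RHS](bigD1 x0) //= wx0 mul0r add0r.
rewrite wS in sumkey.
rewrite (bigD1 x0) //= opprD -sumrN.
have : S * \sum_(a | a != x0) q a <= S by rewrite -{2}(mulr1 S); apply: ler_wpM2l.
rewrite -SE; lra.
Qed.
End Ent.

Section Ent2.
Variable R : realType.

Definition nzv d (v : 'I_d * 'I_d) : bool := ((v.1 : nat) != 0%N) || ((v.2 : nat) != 0%N).

Lemma weight_prod d n (a : pvec d n) (r : R) :
  r ^+ weight a = \prod_i (if nzv (a i) then r else 1).
Proof.
rewrite /weight -prodr_const big_mkcond; apply: eq_bigr => i _; by rewrite inE.
Qed.

Lemma sum_nzv d (Hd : (0 < d)%N) (r : R) :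
  \sum_(v : 'I_d * 'I_d) (if nzv v then r else 1) = 1 + (d * d).-1%:R * r.
Proof.
pose v0 : 'I_d * 'I_d := (Ordinal Hd, Ordinal Hd).
rewrite (bigD1 v0) //. have h0 : nzv v0 = false by []. rewrite h0. congr (_ + _).
rewrite (eq_bigr (fun _ => r)); last first.
  move=> [x y] /= h; case E: (nzv (x, y)) => //; exfalso; move/negP: h; apply.
  move: E; rewrite /nzv /= => /norP[/negPn/eqP hx /negPn/eqP hy].
  by apply/eqP; rewrite /v0; congr (_, _); apply: val_inj.
by rewrite sumr_const cardC1 card_prod card_ord mulr_natl.
Qed.

Lemma sum_weight d n (Hd : (0 < d)%N) (r : R) :
  \sum_(a : pvec d n) r ^+ weight a = (1 + (d * d).-1%:R * r) ^+ n.
Proof.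
rewrite (eq_bigr _ (fun a _ => weight_prod a r)).
rewrite -(bigA_distr_bigA (fun (i : 'I_n) v => if nzv v then r else 1)) /=.
by rewrite (eq_bigr _ (fun i _ => @sum_nzv d Hd r)) prodr_const card_ord.
Qed.

Lemma weight0 d n (Hd : (0 < d)%N) : weight (@zero_vec d n Hd) = 0%N.
Proof.
rewrite /weight; apply/eqP; rewrite cards_eq0; apply/eqP/setP => i.
by rewrite !inE ffunE.
Qed.


Lemma xlog2xE (x : R) : xlog2x x = x * ln x / ln 2.
Proof.
rewrite /xlog2x /log2; case: eqP => [->|_]; first by rewrite !mul0r.
by rewrite mulrA.
Qed.

Lemma entropy_final d n (Hd : (2 <= d)%N) (Hn : (1 <= n)%N) (P : pvec d n -> R) :
  (forall a, 0 <= P a) -> \sum_a P a = 1 ->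
  - \sum_a xlog2x (P a) <=
    2 * (log2 (n%:R : R) + log2 (d%:R : R)) * \sum_a (weight a)%:R * P a
    + binary_entropy (P (@zero_vec d n (ltnW Hd))).
Proof.
move=> P0 P1.
have d0 : (0 < d%:R :> R) by rewrite ltr0n; apply: leq_trans Hd.
have n0 : (0 < n%:R :> R) by rewrite ltr0n.
set x0 := @zero_vec d n (ltnW Hd).
set r : R := ((n%:R * d%:R) ^+ 2)^-1.
have r0 : 0 < r by rewrite invr_gt0 exprn_gt0 // mulr_gt0.
set c : R := 2 * (ln (n%:R : R) + ln (d%:R : R)).
have l2 : 0 < ln (2 : R) by apply: ln_gt0; lra.
have qpos : forall a : pvec d n, 0 < r ^+ weight a by move=> a; apply: exprn_gt0.
have qx0 : r ^+ weight x0 = 1 by rewrite /x0 weight0 expr0.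
have wx0 : (weight x0)%:R = 0 :> R by rewrite /x0 weight0.
have qs : \sum_(a : pvec d n) r ^+ weight a <= 2.
  rewrite (@sum_weight d n (ltnW Hd) r); apply: (@pow_bound2 R _ n Hn).
    by apply: mulr_ge0 => //; exact: ltW.
  have E : n%:R ^+ 2 * ((d * d).-1%:R * r) = (d * d).-1%:R / d%:R ^+ 2 :> R.
    by rewrite /r; field; rewrite !gt_eqF.
  rewrite E ler_pdivrMr ?exprn_gt0 // mul1r -natrX ler_nat -mulnn; exact: leq_pred.
have lnq : forall a : pvec d n, ln (r ^+ weight a) = - c * (weight a)%:R.
  move=> a; rewrite lnXn // /r lnV ?posrE ?exprn_gt0 ?mulr_gt0 // lnXn ?mulr_gt0 //.
  rewrite lnM ?posrE // /c -mulr_natr -mulr_natr; ring.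
have H := @entropy_core R _ P (fun a => r ^+ weight a) (fun a => (weight a)%:R) x0 c
  P0 P1 qpos qx0 wx0 qs lnq.

have E1 : - \sum_a xlog2x (P a) = (- \sum_a P a * ln (P a)) / ln 2.
  by rewrite mulNr mulr_suml; congr (- _); apply: eq_bigr => a _; rewrite xlog2xE.
rewrite E1 /binary_entropy !xlog2xE /log2.
set I := \sum_a _ * P a.
have E2 : 2 * (ln n%:R / ln 2 + ln d%:R / ln 2) * I +
   (- (P x0 * ln (P x0) / ln 2) - (1 - P x0) * ln (1 - P x0) / ln 2) =
   (c * I - P x0 * ln (P x0) - (1 - P x0) * ln (1 - P x0)) / ln 2.
  by rewrite /c; field; rewrite gt_eqF.
rewrite E2; apply: ler_wpM2r => //; rewrite invr_ge0; exact: ltW.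
Qed.
End Ent2.

Section Par.
Local Open Scope complex_scope.
Local Open Scope ring_scope.
Variable R : realType.
Variable d : nat.
Hypothesis Hd : (0 < d)%N.

Local Notation th := (2 * pi / d%:R : R).

Lemma omegaX k : omega R d ^+ k = (cos (k%:R * th)) +i* (sin (k%:R * th)).
Proof.
elim: k => [|k IH]; first by rewrite expr0 mul0r cos0 sin0.
rewrite exprSr IH /omega; simpc.
rewrite (_ : k.+1%:R * th = k%:R * th + th); last by rewrite -[k.+1]addn1 natrD mulrDl mul1r.
rewrite cosD sinD; congr (_ +i* _); apply: addrC.
Qed.

Lemma cos_neq1 (x : R) : 0 < x < pi *+ 2 -> cos x != 1.
Proof.
move=> /andP[x0 x2]; have pi0 := @pi_gt0 R.
have aux : forall y : R, 0 < y <= pi -> cos y != 1.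
  move=> y /andP[y0 ypi]; apply/eqP => hy.
  have : y = 0.
    apply: (@cos_inj R); rewrite ?in_itv /= ?lexx ?(ltW y0) ?ypi ?(ltW pi0) //.
    by rewrite hy cos0.
  by move=> y00; move: y0; rewrite y00 ltxx.
have [xp|xp] := lerP x pi; first by apply: aux; rewrite x0 xp.
have -> : cos x = cos (pi *+ 2 - x).
  by rewrite addrC cosD2pi cosN.
apply: aux; apply/andP; split; rewrite mulr2n; lra.
Qed.

Lemma omega_d : omega R d ^+ d = 1.
Proof.
rewrite omegaX (_ : d%:R * th = pi *+ 2); last first.
  have d0 : d%:R != 0 :> R by rewrite pnatr_eq0 -lt0n.
  by rewrite mulr2n; field.
by rewrite cos2pi sin2pi.
Qed.

Lemma omega_neq1 k : (0 < k < d)%N -> omega R d ^+ k != 1.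
Proof.
move=> /andP[k0 kd]; rewrite omegaX; apply/negP => /eqP /(congr1 (@complex.Re R)) /= /eqP; apply/negP.
apply: cos_neq1.
have dR : (0 < d%:R :> R) by rewrite ltr0n.
have kR : (0 < k%:R :> R) by rewrite ltr0n.
have kdR : (k%:R < d%:R :> R) by rewrite ltr_nat.
have pi0 := @pi_gt0 R.
apply/andP; split.
  by apply: mulr_gt0 => //; apply: divr_gt0 => //; apply: mulr_gt0.
rewrite mulr2n (_ : k%:R * (2 * pi / d%:R) = (2 * pi) * (k%:R / d%:R)); last by field; rewrite gt_eqF.
have : k%:R / d%:R < 1 :> R by rewrite ltr_pdivrMr // mul1r.
have : 0 < k%:R / d%:R :> R by apply: divr_gt0.
nra.
Qed.

Lemma omega_conj : (omega R d)^*%C = omega R d ^+ d.-1.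
Proof.
have h : omega R d * (omega R d)^*%C = 1.
  rewrite /omega; simpc; rewrite -!expr2 cos2Dsin2.
  by rewrite mulrC addNr.
have h2 : omega R d ^+ d.-1 * omega R d = 1 by rewrite -exprSr prednK // omega_d.
by rewrite -[LHS]mul1r -h2 -mulrA h mulr1.
Qed.


Local Notation w := (omega R d).

Lemma omega_mod m : w ^+ m = w ^+ (m %% d).
Proof. by rewrite {1}(divn_eq m d) exprD mulnC exprM omega_d expr1n mul1r. Qed.

Lemma geo (z : R[i]) : z ^+ d = 1 -> z != 1 -> \sum_(t < d) z ^+ t = 0.
Proof.
move=> zd z1; have := subrX1 z d; rewrite zd subrr => /esym/eqP.
by rewrite mulf_eq0 subr_eq0 (negbTE z1) /= => /eqP.
Qed.

Lemma Gsum (k k' : 'I_d) :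
  \sum_(t < d) w ^+ (t * k) * (w ^+ (t * k'))^*%C = if k == k' then d%:R else 0.
Proof.
set m := (k + d.-1 * k')%N.
have E : forall t : 'I_d, w ^+ (t * k) * (w ^+ (t * k'))^*%C = (w ^+ m) ^+ t.
  have oc : forall e, (w ^+ e)^*%C = w ^+ (d.-1 * e).
    by move=> e; rewrite exprM -omega_conj rmorphXn.
  move=> t; rewrite oc -exprD -exprM; congr (_ ^+ _).
  rewrite /m; nia.
rewrite (eq_bigr _ (fun t _ => E t)).
case: eqP => [kk|ne].
  have -> : w ^+ m = 1.
    by rewrite /m -kk -{1}[k : nat]mul1n -mulnDl add1n prednK // exprM omega_d expr1n.
  by rewrite (eq_bigr (fun _ => 1)) ?sumr_const ?card_ord // => t _; rewrite expr1n.
apply: geo; first by rewrite -exprM mulnC exprM omega_d expr1n.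
rewrite omega_mod; apply: omega_neq1; rewrite ltn_pmod // andbT lt0n.
apply/negP => /eqP m0; apply: ne; apply: val_inj => /=.
have h1 : ((m + k') %% d)%N = k.
  rewrite /m -addnA (_ : (d.-1 * k' + k')%N = (k' * d)%N); last first.
    by rewrite -{2}[k' : nat]mul1n -mulnDl addn1 prednK // mulnC.
  by rewrite addnC modnMDl modn_small.
by rewrite -h1 -modnDml m0 add0n modn_small.
Qed.

Lemma count1 (j k : 'I_d) :
  \sum_(s : 'I_d) ((j : nat) == ((k + s) %% d)%N)%:R = 1 :> R[i].
Proof.
pose s0 : 'I_d := Ordinal (ltn_pmod (j + (d - k))%N Hd).
have e1 : ((k + (j + (d - k))) %% d)%N = j.
  rewrite (_ : (k + (j + (d - k)))%N = (j + d)%N); last by have := ltn_ord k; lia.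
  by rewrite modnDr modn_small.
have e2 : ((k + s0) %% d)%N = j by rewrite /s0 /= modnDmr e1.
rewrite (bigD1 s0) //= big1 ?addr0; first by rewrite e2 eqxx.
move=> s ss0; case: eqP => // hj; exfalso; move/negP: ss0; apply.
apply/eqP/val_inj => /=.
have : ((k + s) %% d == (k + s0) %% d)%N by rewrite e2 hj.
rewrite eqn_modDl (modn_small (ltn_ord s)) (modn_small (ltn_ord s0)).
by move/eqP.
Qed.

Lemma conjM (x y : R[i]) : (x * y)^*%C = x^*%C * y^*%C.
Proof. by rewrite rmorphM. Qed.
Lemma conj_nat (m : nat) : (m%:R : R[i])^*%C = m%:R.
Proof. by rewrite rmorph_nat. Qed.

Lemma pauli1E (v : 'I_d * 'I_d) (j k : 'I_d) :
  pauli1 R v j k = ((j : nat) == ((k + v.1) %% d)%N)%:R * w ^+ (v.2 * k).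
Proof. by rewrite /pauli1; case: eqP => _; rewrite ?mul1r ?mul0r. Qed.

Lemma site (j k j' k' : 'I_d) :
  \sum_(v : 'I_d * 'I_d) pauli1 R v j k * (pauli1 R v j' k')^*%C =
  ((j == j') && (k == k'))%:R * d%:R.
Proof.
transitivity (\sum_(s : 'I_d) \sum_(t : 'I_d) pauli1 R (s, t) j k * (pauli1 R (s, t) j' k')^*%C).
  by rewrite pair_bigA; apply: eq_bigr => -[s t].
rewrite (eq_bigr (fun s : 'I_d => (((j : nat) == ((k + s) %% d)%N)%:R *
     ((j' : nat) == ((k' + s) %% d)%N)%:R) * (if k == k' then d%:R else 0))); last first.
  move=> s _; rewrite -Gsum mulr_sumr; apply: eq_bigr => t _.
  by rewrite !pauli1E conjM conj_nat /= mulrACA.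
case: (eqVneq k k') => [<-|ne]; last first.
  by rewrite big1 => [|s _]; rewrite ?mulr0 // andbF mul0r.
rewrite andbT -mulr_suml; congr (_ * _).
case: (eqVneq j j') => [<-|nj].
  rewrite ?eqxx; under eq_bigr => s _ do rewrite -natrM mulnb andbb.
  exact: count1.
rewrite big1 // => s _; case: eqP => hj; case: eqP => hj' //; rewrite ?mul0r ?mulr0 //.
by exfalso; move/eqP: nj; apply; apply: val_inj; rewrite /= hj hj'.
Qed.

Lemma conj_prod (I : finType) (F : I -> R[i]) : (\prod_i F i)^*%C = \prod_i (F i)^*%C.
Proof. by rewrite rmorph_prod. Qed.
Lemma conj_sum (I : finType) (F : I -> R[i]) : (\sum_i F i)^*%C = \sum_i (F i)^*%C.
Proof. by rewrite rmorph_sum. Qed.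

Lemma multi n (z x z' x' : basis d n) :
  \sum_(a : pvec d n) pauli R a z x * (pauli R a z' x')^*%C =
  ((z == z') && (x == x'))%:R * (d ^ n)%:R.
Proof.
rewrite (eq_bigr (fun a : pvec d n => \prod_i (pauli1 R (a i) (z i) (x i) *
     (pauli1 R (a i) (z' i) (x' i))^*%C))); last first.
  by move=> a _; rewrite /pauli conj_prod -big_split.
rewrite -(bigA_distr_bigA (fun i v => pauli1 R v (z i) (x i) * (pauli1 R v (z' i) (x' i))^*%C)) /=.
rewrite (eq_bigr _ (fun i _ => site (z i) (x i) (z' i) (x' i))).
rewrite big_split /= prodr_const card_ord natrX; congr (_ * _).
case: (boolP [forall i, (z i == z' i) && (x i == x' i)]) => [/forallP h|/forallPn [i hi]].
  have ez : z = z' by apply/ffunP => i; case/andP: (h i) => /eqP.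
  have ex : x = x' by apply/ffunP => i; case/andP: (h i) => _ /eqP.
  by rewrite ez ex !eqxx big1 // => i _; rewrite !eqxx.
rewrite (bigD1 i) //= (negbTE hi) mul0r.
case: eqP => [ez|]; case: eqP => [ex|] //=.
by move: hi; rewrite ez ex !eqxx.
Qed.

Lemma Re_add (x y : R[i]) : complex.Re (x + y) = complex.Re x + complex.Re y.
Proof. by case: x; case: y. Qed.

Lemma Re_sum (I : finType) (F : I -> R[i]) : complex.Re (\sum_i F i) = \sum_i complex.Re (F i).
Proof. by apply: (big_morph _ Re_add). Qed.

Lemma Re_natmul (m : nat) (z : R[i]) : complex.Re (m%:R * z) = m%:R * complex.Re z.
Proof.
elim: m => [|m IH]; first by rewrite !mul0r.
by rewrite -!natr1 !mulrDl !mul1r Re_add IH.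
Qed.

Lemma sqmodE (z : R[i]) : sqmod z = complex.Re (z * z^*%C).
Proof. by case: z => a b; rewrite /sqmod /=; simpc; rewrite !expr2. Qed.

Lemma collapse n (f : basis d n -> basis d n -> R[i]) (N : R[i]) (x z : basis d n) :
  \sum_(x' : basis d n) \sum_(z' : basis d n) f x' z' * (((z == z') && (x == x'))%:R * N)
  = f x z * N.
Proof.
rewrite (bigD1 x) //= [X in _ + X]big1 ?addr0 => [|x' nx]; last first.
  have nx' : (x == x') = false by rewrite eq_sym (negbTE nx).
  by apply: big1 => z' _; rewrite nx' andbF mul0r mulr0.
rewrite (bigD1 z) //= [X in _ + X]big1 ?addr0 => [|z' nz]; last first.
  have nz' : (z == z') = false by rewrite eq_sym (negbTE nz).
  by rewrite nz' mul0r mulr0.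
by rewrite (eqxx z) (eqxx x) /= mulr1n mul1r.
Qed.

Lemma expand n (F : basis d n -> basis d n -> R[i]) :
  (\sum_x \sum_z F x z) * (\sum_x \sum_z F x z)^*%C =
  \sum_x \sum_z \sum_x' \sum_z' F x z * (F x' z')^*%C.
Proof.
rewrite big_distrl; apply: eq_bigr => x _ /=.
rewrite big_distrl; apply: eq_bigr => z _ /=.
rewrite conj_sum big_distrr; apply: eq_bigr => x' _ /=.
by rewrite conj_sum big_distrr.
Qed.

Lemma key n (O : op R d n) :
  \sum_(a : pvec d n) trace (opmul O (pauli R a)) * (trace (opmul O (pauli R a)))^*%C =
  (d ^ n)%:R * trace (opmul (adj O) O).
Proof.
rewrite /trace /opmul.
under eq_bigr => a _ do rewrite expand.
rewrite exchange_big; under eq_bigr => x _ do rewrite exchange_big.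
under eq_bigr => x _ do under eq_bigr => x' _ do rewrite exchange_big.
under eq_bigr => x _ do under eq_bigr => x' _ do under eq_bigr => z _ do rewrite exchange_big.
under eq_bigr => x _ do under eq_bigr => z _ do under eq_bigr => x' _ do
  under eq_bigr => z' _ do under eq_bigr => a _ do rewrite conjM mulrACA.
under eq_bigr => x _ do under eq_bigr => z _ do under eq_bigr => x' _ do
  under eq_bigr => z' _ do rewrite -mulr_sumr multi.
under eq_bigr => x _ do under eq_bigr => z _ do
  rewrite (collapse (fun x' z' => O x z * (O x' z')^*%C)).
rewrite mulr_sumr exchange_big; apply: eq_bigr => z _ /=.
rewrite mulr_sumr; apply: eq_bigr => x _ /=.
by rewrite /adj mulrC [_^*%C * _]mulrC.
Qed.

Lemma PO_ge0 n (O : op R d n) a : 0 <= PO O a.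
Proof.
rewrite /PO /sqmod; apply: divr_ge0; last exact: ler0n.
by apply: addr_ge0; apply: sqr_ge0.
Qed.

Lemma PO_sum n (O : op R d n) : norm2 O = 1 -> \sum_a PO O a = 1.
Proof.
rewrite /norm2 => hn.
set T := trace (opmul (adj O) O) in hn *.
have N0 : (0 < (d ^ n)%:R :> R) by rewrite ltr0n expn_gt0 Hd.
have hs : \sum_(a : pvec d n) sqmod (trace (opmul O (pauli R a))) = (d ^ n)%:R * complex.Re T.
  under eq_bigr do rewrite sqmodE.
  by rewrite -Re_sum key Re_natmul.
have y1 : complex.Re T / (d ^ n)%:R = 1.
  have y0 : 0 < complex.Re T / (d ^ n)%:R by rewrite -sqrtr_gt0 hn.
  by rewrite -[LHS]sqr_sqrtr ?hn ?expr1n // ltW.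
have e : ((d ^ n) ^ 2)%:R = (d ^ n)%:R ^+ 2 :> R by rewrite natrX.
rewrite /PO -mulr_suml hs e expr2 invfM mulrA [_ * complex.Re T]mulrC mulfK ?gt_eqF //.
Qed.

End Par.

Theorem mainTheorem5 :
  forall (R : realType) (d n : nat) (Hd : (2 <= d)%N), (1 <= n)%N ->
  forall O : op R d n, norm2 O = 1 ->
    fourier_entropy O <=
      2 * (log2 (n%:R : R) + log2 (d%:R : R)) * total_influence O
      + binary_entropy (PO O (@zero_vec d n (ltnW Hd))).
Proof.
move=> R d n Hd Hn O hO.
have Hd0 : (0 < d)%N by apply: leq_trans Hd.
exact: (entropy_final Hd Hn (PO O) (fun a => PO_ge0 O a) (PO_sum Hd0 O hO)).
Qed.
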